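(* Let ${\bm\pi}^*$ be a probability vector on a finite set $\mathbb{A}$ with all entries positive and $\varepsilon=\min_a\pi^*_a$. Then for every probability vector ${\bm\pi}$ on $\mathbb{A}$ with all entries positive, \[ \|{\bm\pi}^*-{\bm\pi}\|_1\ge 2\varepsilon\sqrt{1-\exp\!\big(-D_{\mathrm{KL}}({\bm\pi}^*\|{\bm\pi})/\varepsilon\big)}. \]
   Context: (In the paper, ${\bm\pi}^*$ is the KL projection of the OMWU initialization onto the equilibrium set, which has full support.) *)

(* Defs.v *)
From mathcomp Require Import all_boot all_order all_algebra.
From mathcomp Require Import all_classical all_reals all_analysis.
Set Implicit Arguments. Unset Strict Implicit. Unset Printing Implicit Defensive.
Import Order.TTheory GRing.Theory Num.Theory.
Local Open Scope ring_scope.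

Definition pos_prob_vec (R : realType) (A : finType) (p : A -> R) : Prop :=
  (forall a, 0 < p a) /\ \sum_(a : A) p a = 1.

(* minimum entry min_a p a; the initial value 1 is harmless since
   entries of a probability vector are <= 1 (and A is nonempty). *)
Definition min_entry (R : realType) (A : finType) (p : A -> R) : R :=
  \big[Num.min/1]_(a : A) p a.

Definition KL (R : realType) (A : finType) (p q : A -> R) : R :=
  \sum_(a : A) p a * ln (p a / q a).

Definition l1dist (R : realType) (A : finType) (p q : A -> R) : R :=
  \sum_(a : A) `|p a - q a|.

(* Main.v *)
Require Import Defs.
From mathcomp Require Import all_boot all_order all_algebra.
From mathcomp Require Import all_classical all_reals all_analysis.
From mathcomp Require Import ring lra.
Import Order.TTheory GRing.Theory Num.Theory.
Local Open Scope ring_scope.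

Section H.
Variable R : realType.

Lemma ln_le_sub1 (z : R) : 0 < z -> ln z <= z - 1.
Proof. move=> z0; have := @le_ln1Dx R (z - 1). have -> : 1 + (z - 1) = z by ring. apply; lra. Qed.

Lemma ln_conc (t a b : R) : 0 <= t -> t <= 1 -> 0 < a -> 0 < b ->
  t * ln a + (1 - t) * ln b <= ln (t * a + (1 - t) * b).
Proof.
move=> t0 t1 a0 b0.
set m := t * a + (1 - t) * b.
have m0 : 0 < m.
  rewrite /m; have [->|tp] := eqVneq t 0; first by rewrite mul0r add0r subr0 mul1r.
  have tp' : 0 < t by rewrite lt_neqAle eq_sym tp t0.
  have := mulr_gt0 tp' a0; have : 0 <= 1 - t by lra. move=> /(mulr_ge0)/(_ (ltW b0)). lra.
have h1 := @ln_le_sub1 _ (divr_gt0 a0 m0).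
have h2 := @ln_le_sub1 _ (divr_gt0 b0 m0).
rewrite ln_div ?posrE // in h1. rewrite ln_div ?posrE // in h2.
have e : t * (a / m - 1) + (1 - t) * (b / m - 1) = 0.
  rewrite /m; field; apply/eqP => E; move: m0; rewrite /m E; lra.
have := lerD (ler_wpM2l t0 h1) (ler_wpM2l (_ : 0 <= 1 - t) h2).
rewrite e. move=> H. have : 0 <= 1 - t by lra. move=> /H. lra.
Qed.

Lemma chordD (x u : R) : 0 <= u -> u <= x -> x < 1 -> u * ln (1 - x) <= x * ln (1 - u).
Proof.
move=> u0 ux x1.
have [x0|xp] := eqVneq x 0.
  have -> : u = 0 by rewrite x0 in ux; lra.
  by rewrite x0 !mul0r.
have xp' : 0 < x by rewrite lt_neqAle eq_sym xp (le_trans u0 ux).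
have := @ln_conc (u / x) (1 - x) 1 (divr_ge0 u0 (ltW xp')).
have h1 : u / x <= 1 by rewrite ler_pdivrMr // mul1r.
have h2 : 0 < 1 - x by lra.
move=> /(_ h1 h2 ltr01).
rewrite ln1 mulr0 addr0.
have -> : u / x * (1 - x) + (1 - u / x) * 1 = 1 - u.
  by rewrite mulrBr !mulr1 divfK //; ring.
move=> H. have := ler_wpM2l (ltW xp') H.
by rewrite mulrA (mulrC x) divfK.
Qed.
Lemma chordI (x v : R) : 0 <= v -> 0 <= x -> Num.min v x * ln (1 + x) <= x * ln (1 + v).
Proof.
move=> v0 x0.
have [xv|vx] := leP x v.

  apply: ler_wpM2l => //.
  have hx : 0 < 1 + x by lra.
  have hv : 0 < 1 + v by lra.
  by rewrite ler_ln ?posrE // lerD2l.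

have xp' : 0 < x by exact: le_lt_trans vx.
have := @ln_conc (v / x) (1 + x) 1 (divr_ge0 v0 x0).
have h1 : v / x <= 1 by rewrite ler_pdivrMr // mul1r ltW.
have h2 : 0 < 1 + x by lra.
move=> /(_ h1 h2 ltr01).
rewrite ln1 mulr0 addr0.
have -> : v / x * (1 + x) + (1 - v / x) * 1 = 1 + v.
  by rewrite mulrDr !mulr1 divfK ?gt_eqF //; ring.
move=> H. have := ler_wpM2l x0 H.
by rewrite mulrA (mulrC x) divfK ?gt_eqF.
Qed.
Lemma termI (pa qa x : R) : 0 < pa -> 0 < qa -> 0 <= x -> x < 1 ->
  pa - qa <= pa * x ->
  x * (pa * ln (pa / qa)) <= - ln (1 - x) * Num.max (pa - qa) 0
     - ln (1 + x) * Num.min (Num.max (qa - pa) 0) (pa * x).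
Proof.
move=> pa0 qa0 x0 x1 hb.
have lnpq : ln (pa / qa) = - ln (qa / pa).
  by rewrite -lnV ?posrE ?divr_gt0 // invf_div.
rewrite lnpq.
have [h|h] := leP qa pa.
  rewrite (@max_l _ _ (pa - qa)); last lra.
  rewrite (@max_r _ _ (qa - pa)); last lra.
  rewrite (@min_l _ _ 0); last by apply: mulr_ge0 => //; exact: ltW.
  rewrite mulr0 subr0.
  have := @chordD x ((pa - qa) / pa).
  have u0 : 0 <= (pa - qa) / pa by apply: divr_ge0; lra.
  have ux : (pa - qa) / pa <= x by rewrite ler_pdivrMr // mulrC.
  move=> /(_ u0 ux x1).
  have -> : 1 - (pa - qa) / pa = qa / pa by field; lra.
  move=> H; have := ler_wpM2l (ltW pa0) H.
  have -> : pa * ((pa - qa) / pa * ln (1 - x)) = (pa - qa) * ln (1 - x) by field; lra.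
  move=> H2. 
  have -> : x * (pa * - ln (qa / pa)) = - (pa * (x * ln (qa / pa))) by ring.
  have -> : - ln (1 - x) * (pa - qa) = - ((pa - qa) * ln (1 - x)) by ring.
  by rewrite lerN2.
rewrite (@max_r _ _ (pa - qa)); last lra.
rewrite (@max_l _ _ (qa - pa)); last lra.
rewrite mulr0 add0r.
have := @chordI x ((qa - pa) / pa).
have v0 : 0 <= (qa - pa) / pa by apply: divr_ge0; lra.
move=> /(_ v0 x0).
have -> : 1 + (qa - pa) / pa = qa / pa by field; lra.
move=> H; have H2 := ler_wpM2l (ltW pa0) H.
rewrite mulrA minr_pMr in H2; last exact: ltW.
have e1 : pa * ((qa - pa) / pa) = qa - pa by field; lra.
rewrite e1 in H2.
have -> : x * (pa * - ln (qa / pa)) = - (pa * (x * ln (qa / pa))) by ring.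
rewrite (mulrC (ln (1 + x))) lerN2.
exact: H2.
Qed.
End H.

Theorem mainTheorem15 (R : realType) (A : finType) (pistar pi : A -> R) :
  pos_prob_vec pistar -> pos_prob_vec pi ->
  l1dist pistar pi >=
    2 * min_entry pistar *
    Num.sqrt (1 - expR (- (KL pistar pi / min_entry pistar))).
Proof.
move=> [p0 p1] [q0 q1].
set p := pistar in p0 p1 *; set q := pi in q0 q1 *.
set e := min_entry p; set d := l1dist p q.
have ep : forall a, e <= p a by move=> a; exact: bigmin_le.
have e0 : 0 < e.
  rewrite /e /min_entry; elim/big_ind: _ => //.
  by move=> x y x0 y0; rewrite lt_min x0.
have d2 : forall a, 2 * `|p a - q a| <= d.
  move=> a; rewrite /d /l1dist (bigD1 a) //=.
  suff : `|p a - q a| <= \sum_(i | i != a) `|p i - q i| by lra.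
  have -> : `|p a - q a| = `|\sum_(b | b != a) (p b - q b)|.
    have : \sum_b (p b - q b) = 0 by rewrite sumrB p1 q1 subrr.
    rewrite (bigD1 a) //= => /eqP; rewrite addr_eq0 => /eqP ->.
    by rewrite normrN.
  exact: ler_norm_sum.
have d0 : 0 <= d by rewrite /d /l1dist sumr_ge0 // => a _; exact: normr_ge0.
have sd0 : \sum_a (p a - q a) = 0 by rewrite sumrB p1 q1 subrr.
have sPos : \sum_a Num.max (p a - q a) 0 = d / 2.
  rewrite (eq_bigr (fun a => (`|p a - q a| + (p a - q a)) / 2)); last first.
    move=> a _; have [h|h] := leP (p a - q a) 0.
      by rewrite ler0_norm //; field.
    by rewrite gtr0_norm //; field.
  by rewrite -mulr_suml big_split /= sd0 addr0.
have sNeg : \sum_a Num.max (q a - p a) 0 = d / 2.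
  rewrite (eq_bigr (fun a => (`|p a - q a| - (p a - q a)) / 2)); last first.
    move=> a _; have [h|h] := leP (q a - p a) 0.
      by rewrite ger0_norm; [field | lra].
    by rewrite ler0_norm; [field | lra].
  by rewrite -mulr_suml sumrB /= sd0 subr0.
have [dbig|dsmall] := leP (2 * e) d.
  apply: le_trans dbig; rewrite -[X in _ <= X]mulr1 ler_wpM2l //; first lra.
  rewrite -[X in _ <= X]sqrtr1 ler_sqrt //; have := expR_ge0 (- (KL p q / e)); lra.
set x := d / (2 * e).
have x0 : 0 <= x by apply: divr_ge0; lra.
have x1 : x < 1 by rewrite /x ltr_pdivrMr ?mul1r //; lra.
have dx : d = 2 * e * x by rewrite /x; field; lra.
have hb : forall a, p a - q a <= p a * x.
  move=> a; have := d2 a; have := ep a; have := ler_norm (p a - q a).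
  move=> h1 h2 h3; apply: le_trans (_ : e * x <= _); last by apply: ler_wpM2r.
  lra.
set Nm := fun a => Num.min (Num.max (q a - p a) 0) (p a * x).
have sNm : e * x <= \sum_a Nm a.
  have [[a Ha]|] := pselect (exists a, p a * x <= Num.max (q a - p a) 0).
    rewrite (bigD1 a) //= {1}/Nm min_r //.
    have : 0 <= \sum_(i | i != a) Nm i.
      apply: sumr_ge0 => i _; rewrite /Nm le_min le_max lexx orbT /=.
      by apply: mulr_ge0 => //; exact: ltW.
    have := ler_wpM2r x0 (ep a); lra.
  move=> /forallNP H.
  rewrite (eq_bigr (fun a => Num.max (q a - p a) 0)); last first.
    by move=> a _; rewrite /Nm min_l //; move/negP: (H a); rewrite -ltNge => /ltW.
  rewrite sNeg dx; lra.
have hx2 : 0 < 1 - x ^+ 2 by nra.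
have xKL : x * KL p q <= - (e * x) * ln (1 - x ^+ 2).
  rewrite /KL mulr_sumr.
  apply: le_trans (_ : \sum_a (- ln (1 - x) * Num.max (p a - q a) 0 - ln (1 + x) * Nm a) <= _).
    by apply: ler_sum => a _; exact: termI (p0 a) (q0 a) x0 x1 (hb a).
  rewrite sumrB -!mulr_sumr sPos.
  have l0 : 0 <= ln (1 + x) by apply: ln_ge0; lra.
  have := ler_wpM2l l0 sNm.
  have -> : 1 - x ^+ 2 = (1 - x) * (1 + x) by ring.
  rewrite lnM ?posrE; [|lra|lra].
  have -> : d / 2 = e * x by rewrite dx; field.
  nra.
have KLb : KL p q <= - e * ln (1 - x ^+ 2).
  have [xz|xp] := eqVneq x 0.
    have dz : d = 0 by rewrite dx xz mulr0.
    rewrite xz expr0n /= subr0 ln1 mulr0 /KL.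
    rewrite big1 // => a _.
    have : `|p a - q a| <= 0 by have := d2 a; rewrite dz; lra.
    rewrite normr_le0 subr_eq0 => /eqP <-.
    by rewrite divff ?gt_eqF // ln1 mulr0.
  have xp' : 0 < x by rewrite lt_neqAle eq_sym xp x0.
  rewrite -(ler_pM2l xp'); apply: le_trans xKL _.
  by rewrite le_eqVlt; apply/orP; left; apply/eqP; ring.
have h1 : ln (1 - x ^+ 2) <= - (KL p q / e).
  rewrite lerNr ler_pdivrMr //; rewrite mulNr in KLb; lra.
have h2 : 1 - x ^+ 2 <= expR (- (KL p q / e)).
  by rewrite -[X in X <= _]lnK ?posrE // ler_expR.
have h3 : Num.sqrt (1 - expR (- (KL p q / e))) <= x.
  rewrite -[X in _ <= X]ger0_norm // -sqrtr_sqr ler_sqrt ?sqr_ge0 //; lra.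
rewrite dx; apply: ler_wpM2l => //; lra.
Qed.
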